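(* In the setting of the two-instance Bernoulli lower bound (instances $\mathcal P_1$: arms $\mathrm{Ber}(p_0),\mathrm{Ber}(p_0-\epsilon)$; $\mathcal P_2$: swapped; approx-oracle allocation $\tilde T_i^*=n\,\mathfrak c(q_i)^{1/\alpha}/(\mathfrak c(q_1)^{1/\alpha}+\mathfrak c(q_2)^{1/\alpha})$ with $q_i$ the parameter of arm $i$), take $p_0=3/4$ and $\epsilon=1/(4\sqrt n)$, and let $(\mathfrak c,\alpha)$ be any one of the following: (i) $\mathfrak c(p)=1-p^2-(1-p)^2$, $\alpha=1$ ($\ell_2^2$-distance); (ii) $\mathfrak c(p)=2\sqrt{p(1-p)}$, $\alpha=1/2$ ($\ell_1$-distance); (iii) $\mathfrak c(p)=\sqrt{1/p-1}+\sqrt{1/(1-p)-1}$, $\alpha=1/2$ (separation distance). Then there is an absolute constant $C>0$ such that for all $n\ge2$ and every adaptive allocation scheme with budget $n$, $$\max_{\mathcal P\in\{\mathcal P_1,\mathcal P_2\}}\ \max_{i\in\{1,2\}}\ \mathbb E_{\mathcal P}\big[|T_i-\tilde T_i^*|\big]\;\ge\;C\sqrt n .$$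
   Context: An adaptive allocation scheme with budget $n$ selects at each round $t=1,\dots,n$ one of two arms based on the past selections and observations; the selected arm yields an independent Bernoulli draw with its parameter. $T_i$ is the total number of pulls of arm $i$ ($T_1+T_2=n$), and $\mathbb E_{\mathcal P}$ is expectation under instance $\mathcal P$. *)

(* Defs.v *)
From Stdlib Require Import Reals Lra List.
Import ListNotations.
Open Scope R_scope.

(* A history is the chronological list of (selected arm, observation) pairs.
   Arm 1 is encoded by [true], arm 2 by [false]; an observation is a Bernoulli
   outcome (true = 1, false = 0). *)
Definition history := list (bool * bool).

Definition policy := history -> bool.

Fixpoint expect (pol : policy) (q1 q2 : R) (k : nat) (h : history)
    (f : history -> R) : R :=
  match k with
  | O => f h
  | S k' =>
      let a := pol h in
      let q := if a then q1 else q2 in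
      q * expect pol q1 q2 k' (h ++ [(a, true)]) f
      + (1 - q) * expect pol q1 q2 k' (h ++ [(a, false)]) f
  end.

Definition E_inst (pol : policy) (q1 q2 : R) (n : nat) (f : history -> R) : R :=
  expect pol q1 q2 n [] f.

Definition pulls (i : bool) (h : history) : R :=
  INR (length (filter (fun x => Bool.eqb (fst x) i) h)).

Definition oracle_alloc (c : R -> R) (alpha : R) (n : nat) (q1 q2 : R)
    (i : bool) : R :=
  INR n * Rpower (c (if i then q1 else q2)) (1 / alpha)
  / (Rpower (c q1) (1 / alpha) + Rpower (c q2) (1 / alpha)).

Definition dev (c : R -> R) (alpha : R) (pol : policy) (n : nat) (q1 q2 : R)
    (i : bool) : R :=
  E_inst pol q1 q2 n (fun h => Rabs (pulls i h - oracle_alloc c alpha n q1 q2 i)).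

Definition c_l2 (p : R) : R := 1 - p ^ 2 - (1 - p) ^ 2.
Definition c_l1 (p : R) : R := 2 * sqrt (p * (1 - p)).
Definition c_sep (p : R) : R := sqrt (1 / p - 1) + sqrt (1 / (1 - p) - 1).

Definition p0 : R := 3 / 4.
Definition eps (n : nat) : R := 1 / (4 * sqrt (INR n)).

(* Main.v *)
Require Import Defs.
From Stdlib Require Import Reals Lra Lia Psatz List.
Import ListNotations.
Open Scope R_scope.

Section T.
Variables (pol : policy) (q1 q2 r1 r2 : R).

Fixpoint tsum (k : nat) (h : history) (x y : R) (F : history -> R -> R -> R) : R :=
  match k with
  | O => F h x y
  | S k' =>
    tsum k' (h ++ [(pol h, true)]) (x * (if pol h then q1 else q2)) (y * (if pol h then r1 else r2)) F
    + tsum k' (h ++ [(pol h, false)]) (x * (1 - if pol h then q1 else q2)) (y * (1 - if pol h then r1 else r2)) F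
  end.

Lemma tsum_x k : forall h x y f, tsum k h x y (fun h x y => x * f h) = x * expect pol q1 q2 k h f.
Proof. induction k; intros; simpl. reflexivity. rewrite !IHk. ring. Qed.

Lemma tsum_y k : forall h x y f, tsum k h x y (fun h x y => y * f h) = y * expect pol r1 r2 k h f.
Proof. induction k; intros; simpl. reflexivity. rewrite !IHk. ring. Qed.

Lemma tsum_add k : forall h x y F G, tsum k h x y (fun h x y => F h x y + G h x y) = tsum k h x y F + tsum k h x y G.
Proof. induction k; intros; simpl. reflexivity. rewrite !IHk. ring. Qed.

Lemma tsum_scal k : forall h x y c F, tsum k h x y (fun h x y => c * F h x y) = c * tsum k h x y F.
Proof. induction k; intros; simpl. reflexivity. rewrite !IHk. ring. Qed.

Hypothesis Hq1 : 0 <= q1 <= 1.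
Hypothesis Hq2 : 0 <= q2 <= 1.
Hypothesis Hr1 : 0 <= r1 <= 1.
Hypothesis Hr2 : 0 <= r2 <= 1.

Lemma tsum_mono F G : (forall h x y, 0 <= x -> 0 <= y -> F h x y <= G h x y) ->
  forall k h x y, 0 <= x -> 0 <= y -> tsum k h x y F <= tsum k h x y G.
Proof.
  intros HFG k; induction k; intros h x y Hx Hy; simpl. auto.
  destruct (pol h); apply Rplus_le_compat; apply IHk; nra.
Qed.

Lemma sqrt4 a b c d : 0 <= a -> 0 <= b -> 0 <= c -> 0 <= d ->
  sqrt (a * c * (b * d)) = sqrt (a * b) * sqrt (c * d).
Proof.
  intros. replace (a * c * (b * d)) with ((a * b) * (c * d)) by ring.
  apply sqrt_mult; nra.
Qed.

Lemma tsum_aff rho : 0 <= rho ->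
  sqrt (q1 * r1) + sqrt ((1 - q1) * (1 - r1)) >= rho ->
  sqrt (q2 * r2) + sqrt ((1 - q2) * (1 - r2)) >= rho ->
  forall k h x y, 0 <= x -> 0 <= y ->
  tsum k h x y (fun _ x y => sqrt (x * y)) >= rho ^ k * sqrt (x * y).
Proof.
  intros Hr H1 H2 k; induction k; intros h x y Hx Hy; simpl. lra.
  assert (Hs := sqrt_pos (x * y)).
  assert (Hp := pow_le rho k Hr).
  destruct (pol h).
  - assert (A1 := IHk (h ++ [(true, true)]) (x * q1) (y * r1) ltac:(nra) ltac:(nra)).
    assert (A2 := IHk (h ++ [(true, false)]) (x * (1 - q1)) (y * (1 - r1)) ltac:(nra) ltac:(nra)).
    rewrite sqrt4 in A1 by lra. rewrite sqrt4 in A2 by lra.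
    assert (rho ^ k * sqrt (x * y) * (sqrt (q1 * r1) + sqrt ((1 - q1) * (1 - r1)))
            >= rho ^ k * sqrt (x * y) * rho) by (apply Rle_ge, Rmult_le_compat_l; nra).
    nra.
  - assert (A1 := IHk (h ++ [(false, true)]) (x * q2) (y * r2) ltac:(nra) ltac:(nra)).
    assert (A2 := IHk (h ++ [(false, false)]) (x * (1 - q2)) (y * (1 - r2)) ltac:(nra) ltac:(nra)).
    rewrite sqrt4 in A1 by lra. rewrite sqrt4 in A2 by lra.
    assert (rho ^ k * sqrt (x * y) * (sqrt (q2 * r2) + sqrt ((1 - q2) * (1 - r2)))
            >= rho ^ k * sqrt (x * y) * rho) by (apply Rle_ge, Rmult_le_compat_l; nra).
    nra.
Qed.

End T.

Lemma expect_const pol q1 q2 k : forall h c, expect pol q1 q2 k h (fun _ => c) = c.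
Proof. induction k; intros; simpl. reflexivity. rewrite !IHk. ring. Qed.

Lemma pointwise x y g g' D s : 0 <= x -> 0 <= y -> 0 <= g -> 0 <= g' -> g + g' >= D -> 0 <= D -> 0 <= s ->
  (2 * s * D) * sqrt (x * y) + ((-(s * s * D)) * (x * 1) + (-(s * s * D)) * (y * 1)) <= x * g + y * g'.
Proof.
  intros Hx Hy Hg Hg' HD HD0 Hs.
  rewrite sqrt_mult by lra.
  assert (Ex : x = sqrt x * sqrt x) by (rewrite sqrt_sqrt; lra).
  assert (Ey : y = sqrt y * sqrt y) by (rewrite sqrt_sqrt; lra).
  assert (0 <= sqrt x) by apply sqrt_pos. assert (0 <= sqrt y) by apply sqrt_pos.
  remember (sqrt x) as u eqn:Hu'. remember (sqrt y) as v eqn:Hv'. clear Hu' Hv'.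
  subst x y.
  destruct (Rle_dec u v).
  - assert (u * u <= v * v) by nra.
    assert (0 <= (v * v - u * u) * g') by (apply Rmult_le_pos; lra).
    assert (u * u * D <= u * u * (g + g')) by (apply Rmult_le_compat_l; nra).
    assert (0 <= D * ((u - s * v) * (u - s * v) + s * s * u * u)) by (apply Rmult_le_pos; [lra | pose proof (Rle_0_sqr (u - s*v)); pose proof (Rle_0_sqr (v - s*u)); pose proof (Rle_0_sqr (s*u)); pose proof (Rle_0_sqr (s*v)); unfold Rsqr in *; nra]).
    nra.
  - assert (v * v <= u * u) by nra.
    assert (0 <= (u * u - v * v) * g) by (apply Rmult_le_pos; lra).
    assert (v * v * D <= v * v * (g + g')) by (apply Rmult_le_compat_l; nra).
    assert (0 <= D * ((v - s * u) * (v - s * u) + s * s * v * v)) by (apply Rmult_le_pos; [lra | pose proof (Rle_0_sqr (u - s*v)); pose proof (Rle_0_sqr (v - s*u)); pose proof (Rle_0_sqr (s*u)); pose proof (Rle_0_sqr (s*v)); unfold Rsqr in *; nra]).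
    nra.
Qed.

Lemma bernoulli t n : 0 <= t <= 1 -> (1 - t) ^ n >= 1 - INR n * t.
Proof.
  intros Ht. induction n. simpl. lra.
  rewrite S_INR. simpl. assert (0 <= INR n) by apply pos_INR. nra.
Qed.

Lemma sq_lb a b : 0 <= a -> a * a <= b -> a <= sqrt b.
Proof.
  intros. rewrite <- (sqrt_square a) by lra. apply sqrt_le_1_alt. lra.
Qed.

Lemma aff_lb e : 0 < e <= 1/4 ->
  sqrt (3/4 * (3/4 - e)) + sqrt ((1 - 3/4) * (1 - (3/4 - e))) >= 1 - 3/2 * (e * e).
Proof.
  intros He.
  assert (3/4 - e/2 - e*e/2 <= sqrt (3/4 * (3/4 - e))) by (apply sq_lb; nra).
  assert (1/4 + e/2 - e*e <= sqrt ((1 - 3/4) * (1 - (3/4 - e)))) by (apply sq_lb; nra).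
  lra.
Qed.

Lemma key pol n e x y : 0 < e <= 1/4 -> INR n * (e * e) <= 1/16 ->
  E_inst pol (3/4) (3/4 - e) n (fun h => Rabs (pulls true h - x))
  + E_inst pol (3/4 - e) (3/4) n (fun h => Rabs (pulls true h - y)) >= Rabs (x - y) / 8.
Proof.
  intros He Hn.
  set (D := Rabs (x - y)).
  assert (HD : 0 <= D) by apply Rabs_pos.
  assert (Hq : 0 <= 3/4 <= 1) by lra. assert (Hq' : 0 <= 3/4 - e <= 1) by lra.
  unfold E_inst.
  rewrite <- (Rmult_1_l (expect pol (3/4) (3/4 - e) n [] _)).
  rewrite <- (Rmult_1_l (expect pol (3/4 - e) (3/4) n [] _)).
  rewrite <- (tsum_x pol (3/4) (3/4 - e) (3/4 - e) (3/4) n [] 1 1).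
  rewrite <- (tsum_y pol (3/4) (3/4 - e) (3/4 - e) (3/4) n [] 1 1).
  rewrite <- tsum_add.
  assert (Hm := tsum_mono pol (3/4) (3/4 - e) (3/4 - e) (3/4) Hq Hq' Hq' Hq
    (fun h x0 y0 => (2 * (1/4) * D) * sqrt (x0 * y0) + ((-((1/4) * (1/4) * D)) * (x0 * 1) + (-((1/4) * (1/4) * D)) * (y0 * 1)))
    (fun h x0 y0 => x0 * Rabs (pulls true h - x) + y0 * Rabs (pulls true h - y))
    ltac:(intros h x0 y0 Hx0 Hy0; apply pointwise; try lra; try apply Rabs_pos;
          unfold D; unfold Rabs; repeat destruct Rcase_abs; lra)
    n [] 1 1 ltac:(lra) ltac:(lra)).
  rewrite !tsum_add, !tsum_scal in Hm.
  rewrite (tsum_x pol (3/4) (3/4 - e) (3/4 - e) (3/4) n [] 1 1 (fun _ => 1)) in Hm.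
  rewrite (tsum_y pol (3/4) (3/4 - e) (3/4 - e) (3/4) n [] 1 1 (fun _ => 1)) in Hm.
  rewrite !expect_const in Hm.
  assert (Ha := tsum_aff pol (3/4) (3/4 - e) (3/4 - e) (3/4) Hq Hq' Hq' Hq (1 - 3/2 * (e*e))
    ltac:(nra) (aff_lb e He)
    ltac:(rewrite (Rmult_comm (3/4 - e)), (Rmult_comm (1 - (3/4 - e))); apply aff_lb; lra)
    n [] 1 1 ltac:(lra) ltac:(lra)).
  rewrite Rmult_1_l, sqrt_1, Rmult_1_r in Ha.
  assert (Hb := bernoulli (3/2 * (e * e)) n ltac:(nra)).
  rewrite tsum_add.
  set (T := tsum pol (3 / 4) (3 / 4 - e) (3 / 4 - e) (3 / 4) n [] 1 1 (fun (_ : history) (x y : R) => sqrt (x * y))) in *.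
  assert (HT : 29/32 <= T) by nra.
  assert (D * (29/32) <= D * T) by (apply Rmult_le_compat_l; lra).
  lra.
Qed.

Lemma Dgen n A B e : 0 < A -> 0 < B -> 0 <= e -> Rabs (A - B) >= e / 2 * (A + B) ->
  Rabs (INR n * A / (A + B) - INR n * B / (B + A)) >= INR n * e / 2.
Proof.
  intros HA HB He H.
  rewrite (Rplus_comm B A).
  replace (INR n * A / (A + B) - INR n * B / (A + B)) with (INR n * (Rabs (A - B) / (A + B)) * (if Rle_dec B A then 1 else -1)).
  2:{ unfold Rabs; destruct Rcase_abs; destruct Rle_dec; try (field; lra); lra. }
  assert (Hz : Rabs (A - B) / (A + B) >= e / 2).
  { set (z := Rabs (A - B)) in *. assert (z = z / (A + B) * (A + B)) by (field; lra). nra. }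
  assert (0 <= INR n) by apply pos_INR.
  destruct Rle_dec; rewrite ?Rmult_1_r.
  - rewrite Rabs_pos_eq. nra. apply Rmult_le_pos. lra. nra.
  - rewrite Rabs_mult. rewrite (Rabs_left (-1)) by lra. rewrite Rabs_pos_eq. nra.
    apply Rmult_le_pos. lra. nra.
Qed.

Lemma cl1_sq p : 0 <= p <= 1 -> c_l1 p ^ 2 = 4 * (p * (1 - p)).
Proof.
  intros. unfold c_l1. replace ((2 * sqrt (p * (1 - p))) ^ 2) with (4 * (sqrt (p * (1 - p)) * sqrt (p * (1 - p)))) by ring.
  rewrite sqrt_sqrt; nra.
Qed.

Lemma cl1_pos p : 0 < p < 1 -> 0 < c_l1 p.
Proof. intros. unfold c_l1. assert (0 < sqrt (p * (1 - p))) by (apply sqrt_lt_R0; nra). lra. Qed.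

Lemma csep_sq p : 0 < p < 1 -> c_sep p ^ 2 = 1 / (p * (1 - p)).
Proof.
  intros. unfold c_sep.
  assert (0 <= 1 / p - 1). { assert (1 / p >= 1). { apply Rle_ge. unfold Rdiv. rewrite Rmult_1_l. rewrite <- Rinv_1. apply Rinv_le_contravar; lra. } lra. }
  assert (0 <= 1 / (1 - p) - 1). { assert (1 / (1 - p) >= 1). { apply Rle_ge. unfold Rdiv. rewrite Rmult_1_l. rewrite <- Rinv_1. apply Rinv_le_contravar; lra. } lra. }
  replace ((sqrt (1 / p - 1) + sqrt (1 / (1 - p) - 1)) ^ 2) with
    (sqrt (1 / p - 1) * sqrt (1 / p - 1) + sqrt (1 / (1 - p) - 1) * sqrt (1 / (1 - p) - 1) + 2 * (sqrt (1 / p - 1) * sqrt (1 / (1 - p) - 1))) by ring.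
  rewrite !sqrt_sqrt by lra. rewrite <- sqrt_mult by lra.
  replace ((1 / p - 1) * (1 / (1 - p) - 1)) with 1 by (field; lra).
  rewrite sqrt_1. field; lra.
Qed.

Lemma csep_pos p : 0 < p < 1 -> 0 < c_sep p.
Proof.
  intros. unfold c_sep.
  assert (1 / p > 1). { unfold Rdiv. rewrite Rmult_1_l. rewrite <- Rinv_1. apply Rinv_lt_contravar; lra. }
  assert (0 < sqrt (1 / p - 1)) by (apply sqrt_lt_R0; lra).
  assert (0 <= sqrt (1 / (1 - p) - 1)) by apply sqrt_pos. lra.
Qed.

Lemma Rpower_pos x y : 0 < Rpower x y.
Proof. unfold Rpower. apply exp_pos. Qed.

Lemma absge a b : a - b >= 0 -> Rabs (a - b) >= a - b.
Proof. intros. apply Rle_ge, Rle_abs. Qed.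
Lemma absge' a b : Rabs (a - b) >= b - a.
Proof. rewrite Rabs_minus_sym. apply Rle_ge, Rle_abs. Qed.

Lemma case_bound c alpha e :
  (c = c_l2 /\ alpha = 1) \/ (c = c_l1 /\ alpha = 1 / 2) \/ (c = c_sep /\ alpha = 1 / 2) ->
  0 < e <= 1/4 ->
  Rabs (Rpower (c (3/4)) (1/alpha) - Rpower (c (3/4 - e)) (1/alpha))
   >= e / 2 * (Rpower (c (3/4)) (1/alpha) + Rpower (c (3/4 - e)) (1/alpha)).
Proof.
  intros [[-> ->] | [[-> ->] | [-> ->]]] He.
  - replace (1/1) with 1 by field.
    rewrite !Rpower_1 by (unfold c_l2; nra).
    eapply Rge_trans. apply absge'. unfold c_l2. nra.
  - replace (1/(1/2)) with (INR 2) by (simpl; field).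
    rewrite !Rpower_pow by (apply cl1_pos; lra).
    rewrite !cl1_sq by lra.
    eapply Rge_trans. apply absge'. nra.
  - replace (1/(1/2)) with (INR 2) by (simpl; field).
    rewrite !Rpower_pow by (apply csep_pos; lra).
    rewrite !csep_sq by lra.
    set (a := 3/4 * (1 - 3/4)). set (b := (3/4 - e) * (1 - (3/4 - e))).
    assert (a = 3/16) by (unfold a; lra).
    assert (Hb : b = 3/16 + e/2 - e*e) by (unfold b; lra).
    assert (0 < b) by nra.
    assert (1 / a - 1 / b - e / 2 * (1 / a + 1 / b) = ((b - a) - e/2 * (a + b)) / (a * b)) by (field; lra).
    assert (0 <= ((b - a) - e/2 * (a + b)) / (a * b)).
    { apply Rmult_le_pos. nra. left; apply Rinv_0_lt_compat; nra. }
    eapply Rge_trans. apply absge. 2: lra.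
    assert (1/a - 1/b = (b - a) / (a * b)) by (field; lra).
    assert (0 <= (b - a) / (a * b)). { apply Rmult_le_pos. nra. left; apply Rinv_0_lt_compat; nra. }
    lra.
Qed.

Theorem mainTheorem8 (c : R -> R) (alpha : R) :
  (c = c_l2 /\ alpha = 1) \/ (c = c_l1 /\ alpha = 1 / 2) \/
  (c = c_sep /\ alpha = 1 / 2) ->
  exists C : R, C > 0 /\
    forall (n : nat) (pol : policy), (2 <= n)%nat ->
      Rmax
        (Rmax (dev c alpha pol n p0 (p0 - eps n) true)
              (dev c alpha pol n p0 (p0 - eps n) false))
        (Rmax (dev c alpha pol n (p0 - eps n) p0 true)
              (dev c alpha pol n (p0 - eps n) p0 false))
      >= C * sqrt (INR n).
Proof.
  intros Hc. exists (1/128). split. lra.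
  intros n pol Hn.
  assert (Hn2 : 2 <= INR n) by (replace 2 with (INR 2) by (simpl; ring); apply le_INR; lia).
  assert (Hs1 : 1 <= sqrt (INR n)) by (rewrite <- sqrt_1; apply sqrt_le_1_alt; lra).
  assert (Hss : sqrt (INR n) * sqrt (INR n) = INR n) by (apply sqrt_sqrt; lra).
  set (s := sqrt (INR n)) in *.
  assert (He : eps n = 1 / (4 * s)) by reflexivity.
  set (e := eps n) in *.
  assert (He1 : 0 < e <= 1/4).
  { rewrite He. split. apply Rdiv_lt_0_compat; lra.
    unfold Rdiv. rewrite !Rmult_1_l. apply Rinv_le_contravar; lra. }
  assert (Hne : INR n * (e * e) = 1/16) by (rewrite He, <- Hss; field; lra).
  assert (Hne' : INR n * e = s / 4) by (rewrite He, <- Hss; field; lra).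
  assert (HD := Dgen n _ _ e (Rpower_pos (c (3/4)) (1/alpha)) (Rpower_pos (c (3/4 - e)) (1/alpha))
     ltac:(lra) (case_bound c alpha e Hc He1)).
  assert (Hk := key pol n e (oracle_alloc c alpha n p0 (p0 - e) true)
                  (oracle_alloc c alpha n (p0 - e) p0 true) He1 ltac:(lra)).
  assert (HD' : Rabs (oracle_alloc c alpha n (3/4) (3/4-e) true - oracle_alloc c alpha n (3/4-e) (3/4) true) >= INR n * e / 2)
    by (cbv beta iota delta [oracle_alloc]; exact HD).
  unfold p0 in Hk.
  unfold dev.
  assert (Rmax (dev c alpha pol n p0 (p0 - e) true) (dev c alpha pol n p0 (p0 - e) false) >= dev c alpha pol n p0 (p0 - e) true) by (apply Rle_ge, Rmax_l).
  assert (Rmax (dev c alpha pol n (p0 - e) p0 true) (dev c alpha pol n (p0 - e) p0 false) >= dev c alpha pol n (p0 - e) p0 true) by (apply Rle_ge, Rmax_l).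
  unfold dev in *. unfold p0 in *.
  assert (H1 := Rmax_l (Rmax (E_inst pol (3 / 4) (3 / 4 - e) n
             (fun h : history => Rabs (pulls true h - oracle_alloc c alpha n (3 / 4) (3 / 4 - e) true)))
          (E_inst pol (3 / 4) (3 / 4 - e) n
             (fun h : history => Rabs (pulls false h - oracle_alloc c alpha n (3 / 4) (3 / 4 - e) false))))
        (Rmax (E_inst pol (3 / 4 - e) (3 / 4) n
             (fun h : history => Rabs (pulls true h - oracle_alloc c alpha n (3 / 4 - e) (3 / 4) true)))
          (E_inst pol (3 / 4 - e) (3 / 4) n
             (fun h : history => Rabs (pulls false h - oracle_alloc c alpha n (3 / 4 - e) (3 / 4) false))))).
  assert (H2 := Rmax_r (Rmax (E_inst pol (3 / 4) (3 / 4 - e) n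
             (fun h : history => Rabs (pulls true h - oracle_alloc c alpha n (3 / 4) (3 / 4 - e) true)))
          (E_inst pol (3 / 4) (3 / 4 - e) n
             (fun h : history => Rabs (pulls false h - oracle_alloc c alpha n (3 / 4) (3 / 4 - e) false))))
        (Rmax (E_inst pol (3 / 4 - e) (3 / 4) n
             (fun h : history => Rabs (pulls true h - oracle_alloc c alpha n (3 / 4 - e) (3 / 4) true)))
          (E_inst pol (3 / 4 - e) (3 / 4) n
             (fun h : history => Rabs (pulls false h - oracle_alloc c alpha n (3 / 4 - e) (3 / 4) false))))).
  lra.
Qed.
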